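(* Fix real parameters $\ell>0$, $\ell_0\in(0,\ell)$, $\rho>0$, $I_\rho>0$, $EI>0$, $K>0$, $m>0$, $\varkappa>0$, $d>0$. Let $s\in\mathbb{C}$ be such that $K+I_\rho s^2\neq 0$, $b\neq 0$, $a^2\neq b$ (with $a,b$ as in the context), and such that the $4\times 4$ matrix $M=M(s)$ defined in the context is invertible; write $M^{-1}=(M^{-1}_{ij})_{i,j=1}^4$. Let $U\in\mathbb{C}$. Suppose $W,\Psi:[0,\ell]\to\mathbb{C}$ are such that their restrictions to $[0,\ell_0]$ and to $[\ell_0,\ell]$ are twice continuously differentiable (derivatives at $\ell_0$ understood one-sidedly, denoted by arguments $\ell_0-0$ and $\ell_0+0$), and they satisfy on $(0,\ell_0)$ and on $(\ell_0,\ell)$ $$K\big(W''(x)-\Psi'(x)\big)-\rho s^2 W(x)=0,\qquad EI\,\Psi''(x)+K\big(W'(x)-\Psi(x)\big)-I_\rho s^2\Psi(x)=0,$$ together with the boundary conditions $W(0)=W(\ell)=0$, $\Psi'(0)=\Psi'(\ell)=0$ and the interface conditions $$W(\ell_0-0)=W(\ell_0+0),\quad \Psi(\ell_0-0)=\Psi(\ell_0+0),\quad \Psi'(\ell_0-0)=\Psi'(\ell_0+0),$$ $$K\big(W'(\ell_0-0)-W'(\ell_0+0)\big)+(ms^2+\varkappa+ds)\,W(\ell_0)=U.$$ Then for every $\ell_k\in[0,\ell]$ one has $W(\ell_k)=H_1(s)\,U$ and $\Psi'(\ell_k)=H_2(s)\,U$, where $$H_1(s)=\begin{cases}\frac1K\Big(z_2(\ell_k,s)M^{-1}_{14}+z_4(\ell_k,s)M^{-1}_{24}\Big),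 & \ell_k\in[0,\ell_0],\\[4pt] \frac1K\Big(z_2(\ell_k-\ell,s)M^{-1}_{34}+z_4(\ell_k-\ell,s)M^{-1}_{44}\Big), & \ell_k\in(\ell_0,\ell],\end{cases}$$ $$H_2(s)=\begin{cases}\frac1{K^2}\Big[\big(-\lambda_1^2\lambda_2^2K z_4(\ell_k,s)-\rho s^2 z_2(\ell_k,s)\big)M^{-1}_{14}+\big(Kz_5(\ell_k,s)-\rho s^2 z_4(\ell_k,s)\big)M^{-1}_{24}\Big], & \ell_k\in[0,\ell_0],\\[4pt] \frac1{K^2}\Big[\big(-\lambda_1^2\lambda_2^2K z_4(\ell_k-\ell,s)-\rho s^2 z_2(\ell_k-\ell,s)\big)M^{-1}_{34}+\big(Kz_5(\ell_k-\ell,s)-\rho s^2 z_4(\ell_k-\ell,s)\big)M^{-1}_{44}\Big], & \ell_k\in(\ell_0,\ell].\end{cases}$$ In other words, $H_1$ and $H_2$ are the transfer functions of the damped Timoshenko beam with attached mass (input: the force $F_0$ at $\ell_0$; outputs: the displacement $w(\ell_k,t)$, resp. the mechanical curvature $\psi'(\ell_k,t)$).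
   Context: This is the Laplace transform (zero initial data, Laplace variable $s$) of the simply supported Timoshenko beam system $\rho\ddot w-K(w''-\psi')=0$, $I_\rho\ddot\psi-EI\psi''-K(w'-\psi)=0$ on $[0,\ell]$, with $w(0,t)=w(\ell,t)=0$, $\psi'(0,t)=\psi'(\ell,t)=0$, continuity of $w,\psi,\psi'$ at $\ell_0$, and $F_0-m\ddot w(\ell_0,t)-\varkappa w(\ell_0,t)-d\dot w(\ell_0,t)-K(w'(\ell_0-0,t)-w'(\ell_0+0,t))=0$; here $W,\Psi,U$ are the Laplace transforms of $w,\psi,F_0$. Parameters: $\rho$ linear density, $I_\rho$ mass moment of inertia of the cross-section, $EI$ bending stiffness, $K=kGA$ shear stiffness, $m$ attached mass, $\varkappa$ spring stiffness, $d$ damping coefficient. Primes denote derivatives in $x$. Notation: $a=\frac{s^2}{2}\big(\frac{\rho}{K}+\frac{I_\rho}{EI}\big)$, $b=\frac{(K+I_\rho s^2)\rho s^2}{K\,EI}$, $\lambda_1=\sqrt{a+\sqrt{a^2-b}}$, $\lambda_2=\sqrt{a-\sqrt{a^2-b}}$ (principal square roots), so that $\lambda_1^2\lambda_2^2=b$. For $x\in\mathbb{R}$: $z_1(x,s)=\lambda_1^2\cosh\lambda_2x-\lambda_2^2\cosh\lambda_1x$, $z_2(x,s)=\frac{1}{\lambda_1\lambda_2}(\lambda_1^3\sinh\lambda_2x-\lambda_2^3\sinh\lambda_1x)$, $z_3(x,s)=\cosh\lambda_1x-\cosh\lambda_2x$, $z_4(x,s)=\frac{1}{\lambda_1\lambda_2}(\lambda_2\sinh\lambda_1x-\lambda_1\sinh\lambda_2x)$,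 $z_5(x,s)=\lambda_1\sinh\lambda_1x-\lambda_2\sinh\lambda_2x$, $z_6(x,s)=\lambda_1^2\cosh\lambda_1x-\lambda_2^2\cosh\lambda_2x$. Further $v=\frac{K}{EI}-\frac{\rho s^2}{K}$, $v_1=\frac{\rho s^2}{K}$, $v_2=\frac{ms^2+ds+\varkappa}{K}$, and writing $z_j^0=z_j(\ell_0,s)$, $z_j^-=z_j(\ell_0-\ell,s)$, $\beta=\lambda_1^2\lambda_2^2$, the matrix $M$ has rows Row 1: $\big(z_2^0,\; z_4^0,\; -z_2^-,\; -z_4^-\big)$; Row 2: $\big(vz_1^0-\beta z_3^0,\; vz_3^0+z_6^0,\; \beta z_3^- - vz_1^-,\; -z_6^- - vz_3^-\big)$; Row 3: $\big(v_1z_2^0+\beta z_4^0,\; v_1z_4^0-z_5^0,\; -\beta z_4^- - v_1z_2^-,\; z_5^- - v_1z_4^-\big)$; Row 4: $\big(z_1^0+v_2z_2^0,\; z_3^0+v_2z_4^0,\; -z_1^-,\; -z_3^-\big)$. *)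

(* Defs.v *)
From Stdlib Require Import Reals.
From Coquelicot Require Import Coquelicot.
Set Implicit Arguments.

Local Open Scope R_scope.

Definition Cexp (z : C) : C :=
  (exp (fst z) * cos (snd z), exp (fst z) * sin (snd z)).

Local Open Scope C_scope.

Definition Ccosh (z : C) : C := (Cexp z + Cexp (- z)) / RtoC 2.
Definition Csinh (z : C) : C := (Cexp z - Cexp (- z)) / RtoC 2.

(** principal square root: real part >= 0, argument in (-pi/2, pi/2] *)
Definition Csqrt (z : C) : C :=
  (sqrt ((Cmod z + fst z) / 2)%R,
   if Rle_dec 0 (snd z) then sqrt ((Cmod z - fst z) / 2)%R
   else (- sqrt ((Cmod z - fst z) / 2))%R).

Section Beam.
Variables (rho Irho EI K m kappa d : R) (s : C).

Definition a_ : C := (s * s / RtoC 2) * (RtoC rho / RtoC K + RtoC Irho / RtoC EI).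
Definition b_ : C := (RtoC K + RtoC Irho * s * s) * RtoC rho * s * s / (RtoC K * RtoC EI).
Definition lam1 : C := Csqrt (a_ + Csqrt (a_ * a_ - b_)).
Definition lam2 : C := Csqrt (a_ - Csqrt (a_ * a_ - b_)).

Definition z1 (x : R) : C :=
  lam1 * lam1 * Ccosh (lam2 * RtoC x) - lam2 * lam2 * Ccosh (lam1 * RtoC x).
Definition z2 (x : R) : C :=
  (lam1 * lam1 * lam1 * Csinh (lam2 * RtoC x) - lam2 * lam2 * lam2 * Csinh (lam1 * RtoC x))
  / (lam1 * lam2).
Definition z3 (x : R) : C := Ccosh (lam1 * RtoC x) - Ccosh (lam2 * RtoC x).
Definition z4 (x : R) : C :=
  (lam2 * Csinh (lam1 * RtoC x) - lam1 * Csinh (lam2 * RtoC x)) / (lam1 * lam2).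
Definition z5 (x : R) : C :=
  lam1 * Csinh (lam1 * RtoC x) - lam2 * Csinh (lam2 * RtoC x).
Definition z6 (x : R) : C :=
  lam1 * lam1 * Ccosh (lam1 * RtoC x) - lam2 * lam2 * Ccosh (lam2 * RtoC x).

Definition v_ : C := RtoC K / RtoC EI - RtoC rho * s * s / RtoC K.
Definition v1 : C := RtoC rho * s * s / RtoC K.
Definition v2 : C := (RtoC m * s * s + RtoC d * s + RtoC kappa) / RtoC K.
Definition beta : C := lam1 * lam1 * lam2 * lam2.

(** 4x4 matrices as functions of 1-based indices (i, j in {1,..,4}). *)
Definition mat4 := nat -> nat -> C.

Variables (l l0 : R).

Definition Mbeam : mat4 := fun i j =>
  let z10 := z1 l0 in let z20 := z2 l0 in let z30 := z3 l0 in
  let z40 := z4 l0 in let z50 := z5 l0 in let z60 := z6 l0 in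
  let z1m := z1 (l0 - l) in let z2m := z2 (l0 - l) in let z3m := z3 (l0 - l) in
  let z4m := z4 (l0 - l) in let z5m := z5 (l0 - l) in let z6m := z6 (l0 - l) in
  match i, j with
  | 1, 1 => z20 | 1, 2 => z40 | 1, 3 => - z2m | 1, 4 => - z4m
  | 2, 1 => v_ * z10 - beta * z30 | 2, 2 => v_ * z30 + z60
  | 2, 3 => beta * z3m - v_ * z1m | 2, 4 => - z6m - v_ * z3m
  | 3, 1 => v1 * z20 + beta * z40 | 3, 2 => v1 * z40 - z50
  | 3, 3 => - beta * z4m - v1 * z2m | 3, 4 => z5m - v1 * z4m
  | 4, 1 => z10 + v2 * z20 | 4, 2 => z30 + v2 * z40
  | 4, 3 => - z1m | 4, 4 => - z3m
  | _, _ => RtoC 0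
  end.

End Beam.

Definition mmul4 (A B : mat4) : mat4 := fun i j =>
  A i 1%nat * B 1%nat j + A i 2%nat * B 2%nat j + A i 3%nat * B 3%nat j + A i 4%nat * B 4%nat j.

Definition id4 : mat4 := fun i j => if Nat.eqb i j then RtoC 1 else RtoC 0.

Definition is_inverse4 (A N : mat4) : Prop :=
  forall i j : nat, (1 <= i <= 4)%nat -> (1 <= j <= 4)%nat ->
    mmul4 A N i j = id4 i j /\ mmul4 N A i j = id4 i j.

(** Derivatives of complex-valued functions of a real variable, taken within
    the closed interval [a, b] (one-sided at the endpoints). *)
Definition has_deriv_on (a b : R) (f df : R -> C) : Prop :=
  forall x, (a <= x <= b)%R ->
    filterlim (fun h : R => scal (/ h)%R (minus (f (x + h)%R) (f x)))
      (within (fun h : R => h <> 0%R /\ (a <= x + h <= b)%R) (locally 0%R))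
      (locally (df x)).

Definition cont_on (a b : R) (f : R -> C) : Prop :=
  forall x, (a <= x <= b)%R ->
    filterlim f (within (fun y : R => (a <= y <= b)%R) (locally x)) (locally (f x)).

Definition C2_on (a b : R) (f df ddf : R -> C) : Prop :=
  has_deriv_on a b f df /\ has_deriv_on a b df ddf /\ cont_on a b ddf.

(* Main.v *)
Require Import Defs.
From Stdlib Require Import Reals Lra Lia.
From Coquelicot Require Import Coquelicot.

Lemma hd_eps a b f df x : has_deriv_on a b f df -> a <= x <= b ->
  forall eps, 0 < eps -> exists del, 0 < del /\ forall h, h <> 0 -> a <= x + h <= b -> Rabs h < del ->
   Rabs ((fst (f (x+h)) - fst (f x))/h - fst (df x)) < eps /\
   Rabs ((snd (f (x+h)) - snd (f x))/h - snd (df x)) < eps.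
Proof.
intros H Hx eps Heps.
specialize (H x Hx (ball (df x) eps) (locally_ball (df x) (mkposreal eps Heps))).
destruct H as [del Hd].
exists (pos del); split; [apply cond_pos|].
intros h Hh Hab Hdel.
assert (B : ball 0 del h).
{ unfold ball; simpl; unfold AbsRing_ball; simpl. unfold minus, plus, opp; simpl.
  change (Rabs (h + - 0) < del); rewrite Ropp_0, Rplus_0_r; exact Hdel. }
specialize (Hd h B (conj Hh Hab)).
destruct Hd as [H1 H2].
unfold ball in H1, H2; simpl in H1, H2; unfold AbsRing_ball in H1, H2; simpl in H1, H2.
unfold minus, plus, opp, scal in H1, H2; simpl in H1, H2.
unfold mult in H1, H2; simpl in H1, H2.
split.
- replace ((fst (f (x + h)) - fst (f x)) / h - fst (df x)) with
   (/ h * (fst (f (x + h)) + - fst (f x)) + - fst (df x)) by (unfold Rdiv; ring). exact H1.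
- replace ((snd (f (x + h)) - snd (f x)) / h - snd (df x)) with
   (/ h * (snd (f (x + h)) + - snd (f x)) + - snd (df x)) by (unfold Rdiv; ring). exact H2.
Qed.

Lemma real_hd (a b : R) (g : R -> R) (d x : R) : a <= x <= b ->
  (forall eps, 0 < eps -> exists del, 0 < del /\ forall h, h <> 0 -> a <= x + h <= b -> Rabs h < del ->
     Rabs ((g (x+h) - g x)/h - d) < eps) ->
  (a < x < b -> derivable_pt_lim g x d) /\ limit1_in g (fun y => a <= y <= b) (g x) x.
Proof.
intros Hx H. split.
- intros Hi eps Heps. destruct (H eps Heps) as [del [Hdel Hd]].
  assert (P : 0 < Rmin del (Rmin (x - a) (b - x))).
  { repeat apply Rmin_pos; lra. }
  exists (mkposreal _ P). simpl. intros h Hh Hlt.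
  assert (h1 := Rmin_l del (Rmin (x - a) (b - x))).
  assert (h2 := Rmin_r del (Rmin (x - a) (b - x))).
  assert (h3 := Rmin_l (x - a) (b - x)).
  assert (h4 := Rmin_r (x - a) (b - x)).
  apply Hd; auto.
  + assert (Rabs h < x - a /\ Rabs h < b - x) by lra.
    destruct H0 as [H0 H1]. apply Rabs_def2 in H0. apply Rabs_def2 in H1. lra.
  + lra.
- intros eps Heps. destruct (H 1 Rlt_0_1) as [del [Hdel Hd]].
  assert (Hd1 : 0 < 1 + Rabs d) by (generalize (Rabs_pos d); lra).
  assert (P : 0 < Rmin del (eps / (1 + Rabs d))).
  { apply Rmin_pos; [lra| apply Rdiv_lt_0_compat; lra]. }
  exists (Rmin del (eps / (1 + Rabs d))). split; [lra|].
  intros y [Hy Hyx]. simpl in *. unfold R_dist in *.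
  destruct (Req_dec y x) as [E|E].
  + subst. rewrite Rminus_eq_0, Rabs_R0. lra.
  + set (h := y - x).
    assert (Hh : h <> 0) by (unfold h; lra).
    assert (Hxh : x + h = y) by (unfold h; ring).
    assert (h1 := Rmin_l del (eps / (1 + Rabs d))).
    assert (h2 := Rmin_r del (eps / (1 + Rabs d))).
    specialize (Hd h Hh). rewrite Hxh in Hd. specialize (Hd Hy ltac:(unfold h; lra)).
    set (u := (g y - g x) / h) in *.
    assert (Eu : g y - g x = u * h) by (unfold u; field; auto).
    rewrite Eu, Rabs_mult.
    assert (Hu : Rabs u < 1 + Rabs d).
    { assert (Rabs u <= Rabs (u - d) + Rabs d).
      { replace u with ((u - d) + d) at 1 by ring. apply Rabs_triang. }
      lra. }
    assert (Hh2 : Rabs h < eps / (1 + Rabs d)) by (unfold h; lra).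
    assert (Hh3 : Rabs h * (1 + Rabs d) < eps).
    { apply (Rmult_lt_compat_r (1 + Rabs d)) in Hh2; [|lra].
      unfold Rdiv in Hh2. rewrite Rmult_assoc, Rinv_l in Hh2; lra. }
    generalize (Rabs_pos u) (Rabs_pos h). nra.
Qed.

Open Scope C_scope.

Definition Dc a b (f df : R -> C) := forall x, (a < x < b)%R ->
  derivable_pt_lim (fun y => fst (f y)) x (fst (df x)) /\
  derivable_pt_lim (fun y => snd (f y)) x (snd (df x)).
Definition Cc a b (f : R -> C) := forall x, (a <= x <= b)%R ->
  limit1_in (fun y => fst (f y)) (fun y => a <= y <= b)%R (fst (f x)) x /\
  limit1_in (fun y => snd (f y)) (fun y => a <= y <= b)%R (snd (f x)) x.

Lemma hd_Dc a b f df : has_deriv_on a b f df -> Dc a b f df.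
Proof.
intros H x Hx. assert (Hx' : (a <= x <= b)%R) by lra.
split; apply (real_hd a b); auto; intros eps Heps;
destruct (hd_eps a b f df x H Hx' eps Heps) as [del [Hd Hh]]; exists del; split; auto;
intros h H1 H2 H3; apply Hh; auto.
Qed.

Lemma hd_Cc a b f df : has_deriv_on a b f df -> Cc a b f.
Proof.
intros H x Hx.
split.
- refine (proj2 (real_hd a b (fun y => fst (f y)) (fst (df x)) x Hx _)).
  intros eps Heps;
  destruct (hd_eps a b f df x H Hx eps Heps) as [del [Hd Hh]]; exists del; split; auto;
  intros h H1 H2 H3; apply Hh; auto.
- refine (proj2 (real_hd a b (fun y => snd (f y)) (snd (df x)) x Hx _)).
  intros eps Heps;
  destruct (hd_eps a b f df x H Hx eps Heps) as [del [Hd Hh]]; exists del; split; auto;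
  intros h H1 H2 H3; apply Hh; auto.
Qed.

Lemma dpl_ext f x l l' : derivable_pt_lim f x l -> l = l' -> derivable_pt_lim f x l'.
Proof. intros; subst; auto. Qed.

Lemma Dc_plus a b f df g dg : Dc a b f df -> Dc a b g dg ->
  Dc a b (fun y => f y + g y) (fun y => df y + dg y).
Proof.
intros Hf Hg x Hx. destruct (Hf x Hx) as [F1 F2]. destruct (Hg x Hx) as [G1 G2].
split; [exact (derivable_pt_lim_plus _ _ _ _ _ F1 G1) | exact (derivable_pt_lim_plus _ _ _ _ _ F2 G2)].
Qed.

Lemma Dc_mult a b f df g dg : Dc a b f df -> Dc a b g dg ->
  Dc a b (fun y => f y * g y) (fun y => df y * g y + f y * dg y).
Proof.
intros Hf Hg x Hx. destruct (Hf x Hx) as [F1 F2]. destruct (Hg x Hx) as [G1 G2].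
split.
- eapply dpl_ext. exact (derivable_pt_lim_minus _ _ _ _ _
     (derivable_pt_lim_mult _ _ _ _ _ F1 G1) (derivable_pt_lim_mult _ _ _ _ _ F2 G2)).
  simpl. ring.
- eapply dpl_ext. exact (derivable_pt_lim_plus _ _ _ _ _
     (derivable_pt_lim_mult _ _ _ _ _ F1 G2) (derivable_pt_lim_mult _ _ _ _ _ F2 G1)).
  simpl. ring.
Qed.

Lemma Dc_const a b (c : C) : Dc a b (fun _ => c) (fun _ => 0).
Proof.
intros x Hx. split; simpl; apply (derivable_pt_lim_const (fst c)) || apply (derivable_pt_lim_const (snd c)).
Qed.

Lemma Cc_plus a b f g : Cc a b f -> Cc a b g -> Cc a b (fun y => f y + g y).
Proof.
intros Hf Hg x Hx. destruct (Hf x Hx) as [F1 F2]. destruct (Hg x Hx) as [G1 G2].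
split; [exact (limit_plus _ _ _ _ _ _ F1 G1) | exact (limit_plus _ _ _ _ _ _ F2 G2)].
Qed.

Lemma Cc_mult a b f g : Cc a b f -> Cc a b g -> Cc a b (fun y => f y * g y).
Proof.
intros Hf Hg x Hx. destruct (Hf x Hx) as [F1 F2]. destruct (Hg x Hx) as [G1 G2].
split.
- exact (limit_minus _ _ _ _ _ _ (limit_mul _ _ _ _ _ _ F1 G1) (limit_mul _ _ _ _ _ _ F2 G2)).
- exact (limit_plus _ _ _ _ _ _ (limit_mul _ _ _ _ _ _ F1 G2) (limit_mul _ _ _ _ _ _ F2 G1)).
Qed.

Lemma Cc_const a b (c : C) : Cc a b (fun _ => c).
Proof.
intros x Hx. split; intros eps Heps; exists 1%R; (split; [lra| intros y _; simpl; unfold R_dist;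
  rewrite Rminus_eq_0, Rabs_R0; lra]).
Qed.

Lemma Cexp_lin mu y : Cexp (mu * RtoC y) =
  (exp (fst mu * y) * cos (snd mu * y), exp (fst mu * y) * sin (snd mu * y))%R.
Proof.
destruct mu as [m1 m2]. unfold Cexp, Cmult, RtoC; simpl.
replace (m1 * y - m2 * 0)%R with (m1 * y)%R by ring.
replace (m1 * 0 + m2 * y)%R with (m2 * y)%R by ring. reflexivity.
Qed.

Lemma Dc_exp a b mu : Dc a b (fun y => Cexp (mu * RtoC y)) (fun y => mu * Cexp (mu * RtoC y)).
Proof.
intros x Hx. destruct mu as [m1 m2].
split; apply is_derive_Reals.
- eapply is_derive_ext. { intro t. rewrite Cexp_lin. simpl. reflexivity. }
  rewrite Cexp_lin. simpl. auto_derive; auto. ring.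
- eapply is_derive_ext. { intro t. rewrite Cexp_lin. simpl. reflexivity. }
  rewrite Cexp_lin. simpl. auto_derive; auto. ring.
Qed.

Lemma cont_lim f D x : continuity_pt f x -> limit1_in f D (f x) x.
Proof.
intros H eps Heps. destruct (H eps Heps) as [alp [Ha Hb]]. exists alp; split; auto.
intros y [Hy Hyx]. destruct (Req_dec x y) as [E|E].
- subst. simpl. unfold R_dist. rewrite Rminus_eq_0, Rabs_R0. lra.
- apply Hb. split; auto. split; auto. exact I.
Qed.

Lemma Cc_exp a b mu : Cc a b (fun y => Cexp (mu * RtoC y)).
Proof.
intros x Hx. destruct mu as [m1 m2]. split; apply cont_lim.
- apply derivable_continuous_pt. exists (fst ((m1,m2) * Cexp ((m1,m2) * RtoC x))).
  apply (proj1 (Dc_exp (x - 1) (x + 1) (m1, m2) x ltac:(lra))).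
- apply derivable_continuous_pt. exists (snd ((m1,m2) * Cexp ((m1,m2) * RtoC x))).
  apply (proj2 (Dc_exp (x - 1) (x + 1) (m1, m2) x ltac:(lra))).
Qed.

Lemma const_real a b (g : R -> R) : (a < b)%R ->
  (forall x, (a < x < b)%R -> derivable_pt_lim g x 0) ->
  (forall x, (a <= x <= b)%R -> limit1_in g (fun y => a <= y <= b)%R (g x) x) ->
  forall x, (a <= x <= b)%R -> g x = g a.
Proof.
intros Hab Hd Hc x Hx.
set (cl := fun y => Rmax a (Rmin b y)).
assert (Hcl : forall y, (a <= y <= b)%R -> cl y = y).
{ intros y Hy. unfold cl. rewrite Rmin_right by lra. rewrite Rmax_right by lra. reflexivity. }
assert (Hcl2 : forall y, (a <= cl y <= b)%R).
{ intros y. unfold cl. split; [apply Rmax_l|].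
  apply Rmax_lub; [lra|apply Rmin_l]. }
assert (Hcl3 : forall y z, (a <= z <= b)%R -> (Rabs (cl y - z) <= Rabs (y - z))%R).
{ intros y z Hz. unfold cl. unfold Rmax, Rmin.
  destruct (Rle_dec b y); destruct (Rle_dec a _);
  apply Rabs_le; split; try (apply Rabs_def2b || idtac);
  destruct (Rle_dec 0 (y - z)); [rewrite Rabs_right by lra | rewrite Rabs_left by lra |
   rewrite Rabs_right by lra | rewrite Rabs_left by lra | rewrite Rabs_right by lra | rewrite Rabs_left by lra|
   rewrite Rabs_right by lra | rewrite Rabs_left by lra| rewrite Rabs_right by lra | rewrite Rabs_left by lra|
   rewrite Rabs_right by lra | rewrite Rabs_left by lra|rewrite Rabs_right by lra | rewrite Rabs_left by lra|
   rewrite Rabs_right by lra | rewrite Rabs_left by lra]; lra. }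
set (G := fun y => g (cl y)).
destruct (Req_dec x a) as [E|E]; [subst; reflexivity|].
assert (Hax : (a < x)%R) by lra.
destruct (MVT_gen G a x (fun _ => 0%R)) as [c [Hc1 Hc2]].
- intros y Hy. rewrite Rmin_left in Hy by lra. rewrite Rmax_right in Hy by lra.
  apply is_derive_Reals. intros eps Heps.
  destruct (Hd y ltac:(lra) eps Heps) as [del Hdel].
  assert (P : (0 < Rmin del (Rmin (y - a) (b - y)))%R).
  { repeat apply Rmin_pos; try lra. apply cond_pos. }
  exists (mkposreal _ P). simpl. intros h Hh Hlt.
  assert (h1 := Rmin_l del (Rmin (y - a) (b - y))).
  assert (h2 := Rmin_r del (Rmin (y - a) (b - y))).
  assert (h3 := Rmin_l (y - a) (b - y)).
  assert (h4 := Rmin_r (y - a) (b - y)).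
  assert (Rabs h < y - a /\ Rabs h < b - y)%R as [H0 H1] by lra.
  apply Rabs_def2 in H0. apply Rabs_def2 in H1.
  unfold G. rewrite !Hcl by lra. apply Hdel; auto. lra.
- intros y Hy. rewrite Rmin_left in Hy by lra. rewrite Rmax_right in Hy by lra.
  intros eps Heps. destruct (Hc y ltac:(lra) eps Heps) as [alp [Ha Hb]].
  exists alp. split; auto. intros z [_ Hz]. simpl in *. unfold R_dist in *.
  unfold G. rewrite (Hcl y) by lra. apply Hb. split; auto.
  eapply Rle_lt_trans; [apply Hcl3; lra| exact Hz].
- unfold G in Hc2. rewrite !Hcl in Hc2 by lra. lra.
Qed.


Lemma const_C a b F dF : (a < b)%R -> Dc a b F dF -> (forall x, (a < x < b)%R -> dF x = 0) ->
  Cc a b F -> forall x, (a <= x <= b)%R -> F x = F a.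
Proof.
intros Hab HD H0 HC x Hx.
assert (E1 : fst (F x) = fst (F a)).
{ apply (const_real a b (fun y => fst (F y))); auto.
  - intros y Hy. destruct (HD y Hy) as [D1 _]. rewrite (H0 y Hy) in D1. exact D1.
  - intros y Hy. exact (proj1 (HC y Hy)). }
assert (E2 : snd (F x) = snd (F a)).
{ apply (const_real a b (fun y => snd (F y))); auto.
  - intros y Hy. destruct (HD y Hy) as [_ D1]. rewrite (H0 y Hy) in D1. exact D1.
  - intros y Hy. exact (proj2 (HC y Hy)). }
destruct (F x), (F a); simpl in *; subst; reflexivity.
Qed.

Lemma Cexp_add z w : Cexp (z + w) = Cexp z * Cexp w.
Proof.
destruct z as [z1 z2], w as [w1 w2]. unfold Cexp, Cmult, Cplus; simpl.
rewrite exp_plus, cos_plus, sin_plus. f_equal; ring.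
Qed.

Lemma Cexp_0 : Cexp 0 = 1.
Proof. unfold Cexp; simpl. rewrite exp_0, cos_0, sin_0. apply injective_projections; simpl; ring. Qed.

Definition Lf (r gg mu W P S Q : C) : C :=
  r*(mu*mu-gg)*W + mu*(mu*mu-gg)*P + mu*gg*S + mu*mu*Q.

Lemma Cexp_shift mu x x0 : Cexp (mu * RtoC x) * Cexp ((- mu) * RtoC x0) = Cexp (mu * RtoC (x - x0)).
Proof. rewrite <- Cexp_add. f_equal. apply injective_projections; simpl; ring. Qed.

Lemma Cexp_inv mu x : Cexp (mu * RtoC x) * Cexp ((- mu) * RtoC x) = 1.
Proof. rewrite Cexp_shift, Rminus_eq_0. rewrite <- Cexp_0. f_equal.
 apply injective_projections; simpl; ring. Qed.

Lemma piece (a b x0 : R) (W dW ddW S dS ddS : R -> C) (r gg kk mu : C) :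
  (a < b)%R -> (x0 = a \/ x0 = b) -> C2_on a b W dW ddW -> C2_on a b S dS ddS ->
  (forall x, (a < x < b)%R -> ddW x = dS x + r * W x /\ ddS x = - kk * dW x + gg * S x) ->
  mu*mu*mu*mu - mu*mu*(r + gg - kk) + r*gg = 0 ->
  forall x, (a <= x <= b)%R ->
  Lf r gg mu (W x) (dW x) (S x) (dS x) =
  Cexp (mu * RtoC (x - x0)) * Lf r gg mu (W x0) (dW x0) (S x0) (dS x0).
Proof.
intros Hab Hx0 [HW1 [HW2 _]] [HS1 [HS2 _]] Hode Hchar.
set (F := fun y => Cexp ((- mu) * RtoC y) * Lf r gg mu (W y) (dW y) (S y) (dS y)).
assert (HF : forall x, (a <= x <= b)%R -> F x = F a).
{ eapply const_C; [exact Hab| | |].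
  - unfold F, Lf. apply Dc_mult; [apply Dc_exp|].
    repeat apply Dc_plus; (apply Dc_mult; [apply Dc_const| apply hd_Dc; eauto]).
  - intros x Hx. cbv beta. destruct (Hode x Hx) as [E1 E2]. rewrite E1, E2.
    transitivity (- (Cexp ((- mu) * RtoC x) * dW x) * (mu*mu*mu*mu - mu*mu*(r + gg - kk) + r*gg)).
    + unfold Lf. ring.
    + rewrite Hchar. ring.
  - unfold F, Lf. apply Cc_mult; [apply Cc_exp|].
    repeat apply Cc_plus; (apply Cc_mult; [apply Cc_const| eapply hd_Cc; eauto]). }
intros x Hx.
assert (Hx0' : (a <= x0 <= b)%R) by (destruct Hx0; subst; lra).
assert (E : F x = F x0) by (rewrite HF, (HF x0); auto).
unfold F in E.
rewrite <- Cexp_shift.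
transitivity (Cexp (mu * RtoC x) * (Cexp (- mu * RtoC x) * Lf r gg mu (W x) (dW x) (S x) (dS x))).
- rewrite Cmult_assoc, Cexp_inv. ring.
- rewrite E. ring.
Qed.

Section Z.
Variables (p q ep em eq eqm : C).
Definition Z1 := p*p*((eq+eqm)/RtoC 2) - q*q*((ep+em)/RtoC 2).
Definition Z2 := (p*p*p*((eq-eqm)/RtoC 2) - q*q*q*((ep-em)/RtoC 2))/(p*q).
Definition Z3 := (ep+em)/RtoC 2 - (eq+eqm)/RtoC 2.
Definition Z4 := (q*((ep-em)/RtoC 2) - p*((eq-eqm)/RtoC 2))/(p*q).
Definition Z5 := p*((ep-em)/RtoC 2) - q*((eq-eqm)/RtoC 2).
Definition Z6 := p*p*((ep+em)/RtoC 2) - q*q*((eq+eqm)/RtoC 2).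
End Z.

Lemma two_nz : RtoC 2 <> 0.
Proof. intro H. apply (f_equal fst) in H. simpl in H. lra. Qed.

Lemma piece_alg (p q r gg kk K P0 S0 W P S Q ep em eq eqm : C) :
  p <> 0 -> q <> 0 -> r <> 0 -> K <> 0 -> p*p - q*q <> 0 ->
  gg = p*p*q*q/r -> kk = r + gg - p*p - q*q ->
  Lf r gg p W P S Q = ep * Lf r gg p 0 P0 S0 0 ->
  Lf r gg (-p) W P S Q = em * Lf r gg (-p) 0 P0 S0 0 ->
  Lf r gg q W P S Q = eq * Lf r gg q 0 P0 S0 0 ->
  Lf r gg (-q) W P S Q = eqm * Lf r gg (-q) 0 P0 S0 0 ->
  let c1 := K*P0/(p*p-q*q) in
  let c2 := K*gg*S0/(p*p-q*q) - (kk - r)*c1 in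
  W = (c1 * Z2 p q ep em eq eqm + c2 * Z4 p q ep em eq eqm)/K /\
  P = (c1 * Z1 p q ep em eq eqm + c2 * Z3 ep em eq eqm)/K /\
  S = (c1*((kk - r)*Z1 p q ep em eq eqm - p*p*q*q*Z3 ep em eq eqm)
       + c2*((kk-r)*Z3 ep em eq eqm + Z6 p q ep em eq eqm))/(K*gg) /\
  Q = ((-(p*p*q*q)*K*Z4 p q ep em eq eqm - r*K*Z2 p q ep em eq eqm)*c1
       + (K*Z5 p q ep em eq eqm - r*K*Z4 p q ep em eq eqm)*c2)/(K*K).
Proof.
intros Hp Hq Hr HK Hpq hg hk H1 H2 H3 H4 c1 c2.
assert (H2n := two_nz).
assert (Hg : gg <> 0).
{ intro E. assert (Hn : p*p*q*q <> 0) by (repeat apply Cmult_neq_0; auto).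
  apply Hn. transitivity (gg * r). rewrite hg. field. auto. rewrite E. ring. }
assert (Hqp : q*q - p*p <> 0).
{ intro E; apply Hpq. transitivity (-(q*q-p*p)). ring. rewrite E. ring. }
set (Lp0 := Lf r gg p 0 P0 S0 0) in *.
set (Lm0 := Lf r gg (-p) 0 P0 S0 0) in *.
set (Lq0 := Lf r gg q 0 P0 S0 0) in *.
set (Lqm0 := Lf r gg (-q) 0 P0 S0 0) in *.
assert (EW : W = (q*q*(ep*Lp0 + em*Lm0) - p*p*(eq*Lq0 + eqm*Lqm0)) / (RtoC 2*r*gg*(p*p-q*q))).
{ rewrite <- H1, <- H2, <- H3, <- H4. unfold Lf. field. auto. }
assert (EQ : Q = ((q*q-gg)*(ep*Lp0 + em*Lm0) - (p*p-gg)*(eq*Lq0 + eqm*Lqm0)) / (RtoC 2*gg*(q*q-p*p))).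
{ rewrite <- H1, <- H2, <- H3, <- H4. unfold Lf. field. repeat split; auto. }
assert (EP : P = ((ep*Lp0 - em*Lm0)/p - (eq*Lq0 - eqm*Lqm0)/q) / (RtoC 2*(p*p-q*q))).
{ rewrite <- H1, <- H2, <- H3, <- H4. unfold Lf. field. auto. }
assert (ES : S = ((q*q-gg)*(ep*Lp0 - em*Lm0)/p - (p*p-gg)*(eq*Lq0 - eqm*Lqm0)/q) / (RtoC 2*gg*(q*q-p*p))).
{ rewrite <- H1, <- H2, <- H3, <- H4. unfold Lf. field. repeat split; auto. }
unfold c2, c1, Lp0, Lm0, Lq0, Lqm0, Z1, Z2, Z3, Z4, Z5, Z6 in *.
rewrite EW, EP, ES, EQ. clear EW EP ES EQ H1 H2 H3 H4.
subst kk gg. unfold Lf.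
repeat split; field; repeat split; auto.
Qed.

Lemma char_root (p q r gg kk mu : C) : r <> 0 -> gg = p*p*q*q/r -> kk = r + gg - p*p - q*q ->
  (mu = p \/ mu = - p \/ mu = q \/ mu = - q) ->
  mu*mu*mu*mu - mu*mu*(r + gg - kk) + r*gg = 0.
Proof.
intros Hr hg hk Hmu. subst kk gg.
destruct Hmu as [E|[E|[E|E]]]; subst mu; field; auto.
Qed.

Lemma Cexp_negm p t : Cexp (- p * RtoC t) = Cexp (- (p * RtoC t)).
Proof. f_equal. ring. Qed.

Lemma beam_piece (a b x0 : R) (W dW ddW S dS ddS : R -> C) (p q r gg kk K c1 c2 : C) :
  (a < b)%R -> (x0 = a \/ x0 = b) -> C2_on a b W dW ddW -> C2_on a b S dS ddS ->
  (forall x, (a < x < b)%R -> ddW x = dS x + r * W x /\ ddS x = - kk * dW x + gg * S x) ->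
  W x0 = 0 -> dS x0 = 0 ->
  p <> 0 -> q <> 0 -> r <> 0 -> K <> 0 -> p*p - q*q <> 0 ->
  gg = p*p*q*q/r -> kk = r + gg - p*p - q*q ->
  c1 = K * dW x0 / (p*p-q*q) -> c2 = K*gg*S x0/(p*p-q*q) - (kk - r)*c1 ->
  forall x t, (a <= x <= b)%R -> t = (x - x0)%R ->
  let ep := Cexp (p * RtoC t) in let em := Cexp (- (p * RtoC t)) in
  let eq := Cexp (q * RtoC t) in let eqm := Cexp (- (q * RtoC t)) in
  W x = (c1 * Z2 p q ep em eq eqm + c2 * Z4 p q ep em eq eqm)/K /\
  dW x = (c1 * Z1 p q ep em eq eqm + c2 * Z3 ep em eq eqm)/K /\
  S x = (c1*((kk - r)*Z1 p q ep em eq eqm - p*p*q*q*Z3 ep em eq eqm)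
       + c2*((kk-r)*Z3 ep em eq eqm + Z6 p q ep em eq eqm))/(K*gg) /\
  dS x = ((-(p*p*q*q)*K*Z4 p q ep em eq eqm - r*K*Z2 p q ep em eq eqm)*c1
       + (K*Z5 p q ep em eq eqm - r*K*Z4 p q ep em eq eqm)*c2)/(K*K).
Proof.
intros Hab Hx0 HW HS Hode HW0 HS0 Hp Hq Hr HK Hpq hg hk hc1 hc2 x t Hx Ht ep em eq eqm.
subst c2 c1 t.
assert (HL : forall mu, (mu = p \/ mu = - p \/ mu = q \/ mu = - q) ->
  Lf r gg mu (W x) (dW x) (S x) (dS x) = Cexp (mu * RtoC (x - x0)) * Lf r gg mu 0 (dW x0) (S x0) 0).
{ intros mu Hmu. rewrite <- HW0, <- HS0 at 1.
  apply (piece a b x0 W dW ddW S dS ddS r gg kk mu); auto.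
  apply (char_root p q); auto. }
apply piece_alg; try assumption.
- unfold ep. apply (HL p); auto.
- unfold em. rewrite <- Cexp_negm. apply (HL (-p)); auto.
- unfold eq. apply (HL q); auto.
- unfold eqm. rewrite <- Cexp_negm. apply (HL (-q)); auto.
Qed.

Lemma rows (K gg r pq v v2 V U c1 c2 c3 c4 z10 z20 z30 z40 z50 z60 z1m z2m z3m z4m z5m z6m : C) :
  K <> 0 -> gg <> 0 ->
  (c1*z20 + c2*z40)/K = (c3*z2m + c4*z4m)/K ->
  (c1*(v*z10 - pq*z30) + c2*(v*z30 + z60))/(K*gg) = (c3*(v*z1m - pq*z3m) + c4*(v*z3m+z6m))/(K*gg) ->
  ((-pq*K*z40 - r*K*z20)*c1 + (K*z50 - r*K*z40)*c2)/(K*K) =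
  ((-pq*K*z4m - r*K*z2m)*c3 + (K*z5m - r*K*z4m)*c4)/(K*K) ->
  K*((c1*z10 + c2*z30)/K - (c3*z1m + c4*z3m)/K) + V*((c1*z20+c2*z40)/K) = U ->
  v2 * K = V ->
  z20*c1 + z40*c2 + (-z2m)*c3 + (-z4m)*c4 = 0 /\
  (v*z10 - pq*z30)*c1 + (v*z30 + z60)*c2 + (pq*z3m - v*z1m)*c3 + (-z6m - v*z3m)*c4 = 0 /\
  (r*z20 + pq*z40)*c1 + (r*z40 - z50)*c2 + (-pq*z4m - r*z2m)*c3 + (z5m - r*z4m)*c4 = 0 /\
  (z10 + v2*z20)*c1 + (z30 + v2*z40)*c2 + (-z1m)*c3 + (-z3m)*c4 = U.
Proof.
intros HK Hg H1 H2 H3 H4 H5. repeat split.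
- transitivity (K*((c1*z20 + c2*z40)/K - (c3*z2m + c4*z4m)/K)). field; auto.
  rewrite H1. ring.
- transitivity (K*gg*((c1*(v*z10 - pq*z30) + c2*(v*z30 + z60))/(K*gg) - (c3*(v*z1m - pq*z3m) + c4*(v*z3m+z6m))/(K*gg))).
  field; auto. rewrite H2. ring.
- transitivity (-K*(((-pq*K*z40 - r*K*z20)*c1 + (K*z50 - r*K*z40)*c2)/(K*K) -
  ((-pq*K*z4m - r*K*z2m)*c3 + (K*z5m - r*K*z4m)*c4)/(K*K))). field; auto. rewrite H3. ring.
- rewrite <- H4, <- H5. field; auto.
Qed.

Lemma inv_apply (M N : mat4) (c1 c2 c3 c4 U : C) : is_inverse4 M N ->
  M 1%nat 1%nat * c1 + M 1%nat 2%nat * c2 + M 1%nat 3%nat * c3 + M 1%nat 4%nat * c4 = 0 ->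
  M 2%nat 1%nat * c1 + M 2%nat 2%nat * c2 + M 2%nat 3%nat * c3 + M 2%nat 4%nat * c4 = 0 ->
  M 3%nat 1%nat * c1 + M 3%nat 2%nat * c2 + M 3%nat 3%nat * c3 + M 3%nat 4%nat * c4 = 0 ->
  M 4%nat 1%nat * c1 + M 4%nat 2%nat * c2 + M 4%nat 3%nat * c3 + M 4%nat 4%nat * c4 = U ->
  c1 = N 1%nat 4%nat * U /\ c2 = N 2%nat 4%nat * U /\ c3 = N 3%nat 4%nat * U /\ c4 = N 4%nat 4%nat * U.
Proof.
intros Hinv R1 R2 R3 R4.
assert (G : forall i, (1 <= i <= 4)%nat ->
  mmul4 N M i 1%nat * c1 + mmul4 N M i 2%nat * c2 + mmul4 N M i 3%nat * c3 + mmul4 N M i 4%nat * c4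
  = N i 4%nat * U).
{ intros i Hi. rewrite <- R4.
  transitivity (N i 1%nat * 0 + N i 2%nat * 0 + N i 3%nat * 0 +
    N i 4%nat * (M 4%nat 1%nat * c1 + M 4%nat 2%nat * c2 + M 4%nat 3%nat * c3 + M 4%nat 4%nat * c4)).
  - rewrite <- R1 at 1. rewrite <- R2 at 1. rewrite <- R3 at 1. unfold mmul4. ring.
  - ring. }
assert (F : forall i k, (1 <= i <= 4)%nat -> (1 <= k <= 4)%nat -> mmul4 N M i k = id4 i k).
{ intros i k Hi Hk. exact (proj2 (Hinv i k Hi Hk)). }
repeat split.
- rewrite <- G by lia. rewrite !F by lia. unfold id4; simpl. ring.
- rewrite <- G by lia. rewrite !F by lia. unfold id4; simpl. ring.
- rewrite <- G by lia. rewrite !F by lia. unfold id4; simpl. ring.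
- rewrite <- G by lia. rewrite !F by lia. unfold id4; simpl. ring.
Qed.

Lemma fin1 (K pq rhoss r c1 c2 N1 N2 U z2x z4x z5x Wx dPx : C) : K <> 0 -> rhoss = r*K ->
  c1 = N1*U -> c2 = N2*U -> Wx = (c1*z2x + c2*z4x)/K ->
  dPx = ((-pq*K*z4x - r*K*z2x)*c1 + (K*z5x - r*K*z4x)*c2)/(K*K) ->
  Wx = (z2x*N1 + z4x*N2)/K * U /\
  dPx = ((-pq*K*z4x - rhoss*z2x)*N1 + (K*z5x - rhoss*z4x)*N2)/(K*K)*U.
Proof.
intros HK Hr H1 H2 H3 H4. subst. split; field; auto.
Qed.

Local Open Scope R_scope.
Lemma Csqrt_sq z : (Csqrt z * Csqrt z = z)%C.
Proof.
destruct z as [x y]. unfold Csqrt. simpl fst; simpl snd.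
set (M := Cmod (x, y)).
assert (HM : M * M = x * x + y * y).
{ unfold M, Cmod. simpl. rewrite sqrt_sqrt; [ring|]. nra. }
assert (HM0 : 0 <= M) by (unfold M; apply Cmod_ge_0).
assert (Hx1 : 0 <= (M + x) / 2) by nra.
assert (Hx2 : 0 <= (M - x) / 2) by nra.
assert (HA : sqrt ((M + x) / 2) * sqrt ((M + x) / 2) = (M + x) / 2) by (apply sqrt_sqrt; auto).
assert (HB : sqrt ((M - x) / 2) * sqrt ((M - x) / 2) = (M - x) / 2) by (apply sqrt_sqrt; auto).
assert (HAB : sqrt ((M + x) / 2) * sqrt ((M - x) / 2) = Rabs y / 2).
{ rewrite <- sqrt_mult by auto.
  replace ((M + x) / 2 * ((M - x) / 2)) with ((Rabs y / 2) * (Rabs y / 2)).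
  - apply sqrt_square. generalize (Rabs_pos y); lra.
  - replace ((M + x) / 2 * ((M - x) / 2)) with ((M*M - x*x)/4) by field.
    rewrite HM.
    assert (Ey : Rabs y * Rabs y = y * y) by (rewrite <- Rabs_mult; apply Rabs_pos_eq; nra).
    rewrite <- Ey. field. }
destruct (Rle_dec 0 y) as [Hy|Hy]; unfold Cmult; simpl; apply injective_projections; simpl.
- rewrite HA, HB. field.
- rewrite (Rmult_comm (sqrt ((M - x) / 2))), HAB, Rabs_right by lra. field.
- replace (sqrt ((M + x) / 2) * sqrt ((M + x) / 2) - - sqrt ((M - x) / 2) * - sqrt ((M - x) / 2))
    with (sqrt ((M + x) / 2) * sqrt ((M + x) / 2) - sqrt ((M - x) / 2) * sqrt ((M - x) / 2)) by ring.
  rewrite HA, HB. field.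
- replace (sqrt ((M + x) / 2) * - sqrt ((M - x) / 2) + - sqrt ((M - x) / 2) * sqrt ((M + x) / 2))
    with (- (2 * (sqrt ((M + x) / 2) * sqrt ((M - x) / 2)))) by ring.
  rewrite HAB, Rabs_left by lra. field.
Qed.

Local Open Scope C_scope.

Lemma lin1 (Kc A B c Cw : C) : Kc <> 0 -> Kc*(A - B) - c*Cw = 0 -> A = B + c/Kc*Cw.
Proof. intros HK H. transitivity (B + c/Kc*Cw + (Kc*(A - B) - c*Cw)/Kc). field; auto. rewrite H. field; auto. Qed.

Lemma lin2 (E Kc A B D c : C) : E <> 0 -> E*A + Kc*(B - D) - c*D = 0 -> A = -(Kc/E)*B + ((Kc + c)/E)*D.
Proof. intros HE H. transitivity (-(Kc/E)*B + ((Kc + c)/E)*D + (E*A + Kc*(B - D) - c*D)/E). field; auto. rewrite H. field; auto. Qed.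

Lemma RtoC_nz x : (0 < x)%R -> RtoC x <> 0.
Proof. intros H E. apply (f_equal fst) in E. simpl in E. lra. Qed.

Theorem proposition1
  (l l0 rho Irho EI K m kappa d : R) (s U : C)
  (W Psi dW1 ddW1 dW2 ddW2 dPsi1 ddPsi1 dPsi2 ddPsi2 : R -> C)
  (Minv : mat4) :
  (0 < l)%R -> (0 < l0 < l)%R -> (0 < rho)%R -> (0 < Irho)%R -> (0 < EI)%R ->
  (0 < K)%R -> (0 < m)%R -> (0 < kappa)%R -> (0 < d)%R ->
  RtoC K + RtoC Irho * s * s <> RtoC 0 ->
  b_ rho Irho EI K s <> RtoC 0 ->
  a_ rho Irho EI K s * a_ rho Irho EI K s <> b_ rho Irho EI K s ->
  is_inverse4 (Mbeam rho Irho EI K m kappa d s l l0) Minv ->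
  (* W, Psi are C^2 on [0, l0] and on [l0, l] (one-sided derivatives at l0) *)
  C2_on 0 l0 W dW1 ddW1 -> C2_on l0 l W dW2 ddW2 ->
  C2_on 0 l0 Psi dPsi1 ddPsi1 -> C2_on l0 l Psi dPsi2 ddPsi2 ->
  (* the equations on (0, l0) and (l0, l) *)
  (forall x, (0 < x < l0)%R ->
     RtoC K * (ddW1 x - dPsi1 x) - RtoC rho * s * s * W x = RtoC 0 /\
     RtoC EI * ddPsi1 x + RtoC K * (dW1 x - Psi x) - RtoC Irho * s * s * Psi x = RtoC 0) ->
  (forall x, (l0 < x < l)%R ->
     RtoC K * (ddW2 x - dPsi2 x) - RtoC rho * s * s * W x = RtoC 0 /\
     RtoC EI * ddPsi2 x + RtoC K * (dW2 x - Psi x) - RtoC Irho * s * s * Psi x = RtoC 0) ->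
  (* boundary conditions *)
  W 0%R = RtoC 0 -> W l = RtoC 0 -> dPsi1 0%R = RtoC 0 -> dPsi2 l = RtoC 0 ->
  (* interface conditions (continuity of W and Psi at l0 is built in,
     since W and Psi are single functions continuous on both closed pieces) *)
  dPsi1 l0 = dPsi2 l0 ->
  RtoC K * (dW1 l0 - dW2 l0) + (RtoC m * s * s + RtoC kappa + RtoC d * s) * W l0 = U ->
  forall lk : R,
    ((0 <= lk <= l0)%R ->
       W lk = (z2 rho Irho EI K s lk * Minv 1%nat 4%nat
               + z4 rho Irho EI K s lk * Minv 2%nat 4%nat) / RtoC K * U /\
       dPsi1 lk =
         ((- beta rho Irho EI K s * RtoC K * z4 rho Irho EI K s lk
             - RtoC rho * s * s * z2 rho Irho EI K s lk) * Minv 1%nat 4%nat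
          + (RtoC K * z5 rho Irho EI K s lk
             - RtoC rho * s * s * z4 rho Irho EI K s lk) * Minv 2%nat 4%nat)
         / (RtoC K * RtoC K) * U) /\
    ((l0 < lk <= l)%R ->
       W lk = (z2 rho Irho EI K s (lk - l) * Minv 3%nat 4%nat
               + z4 rho Irho EI K s (lk - l) * Minv 4%nat 4%nat) / RtoC K * U /\
       dPsi2 lk =
         ((- beta rho Irho EI K s * RtoC K * z4 rho Irho EI K s (lk - l)
             - RtoC rho * s * s * z2 rho Irho EI K s (lk - l)) * Minv 3%nat 4%nat
          + (RtoC K * z5 rho Irho EI K s (lk - l)
             - RtoC rho * s * s * z4 rho Irho EI K s (lk - l)) * Minv 4%nat 4%nat)
         / (RtoC K * RtoC K) * U).
Proof.
intros Hl Hl0 Hrho HIrho HEI HK Hm Hkap Hd HgK Hb Hab Hinv HW1 HW2 HS1 HS2 Hode1 Hode2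
  W0 Wl dS0 dSl Hint HU lk.
assert (HKc := RtoC_nz K HK). assert (HEc := RtoC_nz EI HEI).
set (p := lam1 rho Irho EI K s). set (q := lam2 rho Irho EI K s).
set (a := a_ rho Irho EI K s) in *. set (b := b_ rho Irho EI K s) in *.
set (sq := Csqrt (a * a - b)).
assert (Hpp : p * p = a + sq) by exact (Csqrt_sq _).
assert (Hqq : q * q = a - sq) by exact (Csqrt_sq _).
assert (Hsq : sq * sq = a * a - b) by exact (Csqrt_sq _).
assert (Hsqnz : sq <> 0).
{ intro E. apply Hab. transitivity ((a*a - b) + b); [ring|]. rewrite <- Hsq, E. ring. }
assert (Hpq : p*p - q*q <> 0).
{ rewrite Hpp, Hqq. replace (a + sq - (a - sq)) with (RtoC 2 * sq) by ring.
  apply Cmult_neq_0; [apply two_nz|auto]. }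
assert (Hppqq : p*p*q*q = b).
{ transitivity ((p*p)*(q*q)); [ring|]. rewrite Hpp, Hqq.
  transitivity (a*a - sq*sq); [ring|]. rewrite Hsq; ring. }
set (r := RtoC rho * s * s / RtoC K).
set (gg := (RtoC K + RtoC Irho * s * s) / RtoC EI).
set (kk := RtoC K / RtoC EI).
assert (Hbrg : b = r * gg) by (unfold b, b_, r, gg; field; split; auto).
assert (Hp0 : p <> 0) by (intro E; apply Hb; rewrite <- Hppqq, E; ring).
assert (Hq0 : q <> 0) by (intro E; apply Hb; rewrite <- Hppqq, E; ring).
assert (Hr0 : r <> 0) by (intro E; apply Hb; rewrite Hbrg, E; ring).
assert (Hg0 : gg <> 0) by (intro E; apply Hb; rewrite Hbrg, E; ring).
assert (hg : gg = p*p*q*q/r) by (rewrite Hppqq, Hbrg; field; auto).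
assert (hk : kk = r + gg - p*p - q*q).
{ assert (E : p*p + q*q = RtoC 2 * a) by (rewrite Hpp, Hqq; ring).
  transitivity (r + gg - (p*p + q*q)); [|ring]. rewrite E.
  unfold a, a_, r, gg, kk. field; split; auto. }
assert (Hode1' : forall x, (0 < x < l0)%R ->
   ddW1 x = dPsi1 x + r * W x /\ ddPsi1 x = - kk * dW1 x + gg * Psi x).
{ intros x Hx. destruct (Hode1 x Hx) as [E1 E2]. split.
  - exact (lin1 _ _ _ _ _ HKc E1).
  - exact (lin2 _ _ _ _ _ _ HEc E2). }
assert (Hode2' : forall x, (l0 < x < l)%R ->
   ddW2 x = dPsi2 x + r * W x /\ ddPsi2 x = - kk * dW2 x + gg * Psi x).
{ intros x Hx. destruct (Hode2 x Hx) as [E1 E2]. split.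
  - exact (lin1 _ _ _ _ _ HKc E1).
  - exact (lin2 _ _ _ _ _ _ HEc E2). }
set (c1 := RtoC K * dW1 0%R / (p*p-q*q)).
set (c2 := RtoC K * gg * Psi 0%R / (p*p-q*q) - (kk - r) * c1).
set (c3 := RtoC K * dW2 l / (p*p-q*q)).
set (c4 := RtoC K * gg * Psi l / (p*p-q*q) - (kk - r) * c3).
assert (LP := beam_piece 0 l0 0 W dW1 ddW1 Psi dPsi1 ddPsi1 p q r gg kk (RtoC K) c1 c2
  ltac:(lra) (or_introl eq_refl) HW1 HS1 Hode1' W0 dS0 Hp0 Hq0 Hr0 HKc Hpq hg hk eq_refl eq_refl).
assert (RP := beam_piece l0 l l W dW2 ddW2 Psi dPsi2 ddPsi2 p q r gg kk (RtoC K) c3 c4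
  ltac:(lra) (or_intror eq_refl) HW2 HS2 Hode2' Wl dSl Hp0 Hq0 Hr0 HKc Hpq hg hk eq_refl eq_refl).
destruct (LP l0 l0 ltac:(lra) ltac:(ring)) as [WL [dWL [SL dSL]]].
destruct (RP l0 (l0 - l)%R ltac:(lra) eq_refl) as [WR [dWR [SR dSR]]].
assert (HU' := HU). rewrite dWL, dWR, WL in HU'.
assert (Hv2 : v2 K m kappa d s * RtoC K = RtoC m * s * s + RtoC kappa + RtoC d * s)
  by (unfold v2; field; auto).
destruct (rows (RtoC K) gg r (p*p*q*q) (kk - r) (v2 K m kappa d s)
  (RtoC m * s * s + RtoC kappa + RtoC d * s) U c1 c2 c3 c4
  (z1 rho Irho EI K s l0) (z2 rho Irho EI K s l0) (z3 rho Irho EI K s l0)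
  (z4 rho Irho EI K s l0) (z5 rho Irho EI K s l0) (z6 rho Irho EI K s l0)
  (z1 rho Irho EI K s (l0 - l)) (z2 rho Irho EI K s (l0 - l)) (z3 rho Irho EI K s (l0 - l))
  (z4 rho Irho EI K s (l0 - l)) (z5 rho Irho EI K s (l0 - l)) (z6 rho Irho EI K s (l0 - l))
  HKc Hg0 (eq_trans (eq_sym WL) WR) (eq_trans (eq_sym SL) SR)
  (eq_trans (eq_sym dSL) (eq_trans Hint dSR)) HU' Hv2) as [R1 [R2 [R3 R4]]].
destruct (inv_apply (Mbeam rho Irho EI K m kappa d s l l0) Minv c1 c2 c3 c4 U Hinv R1 R2 R3 R4)
  as [Hc1 [Hc2 [Hc3 Hc4]]].
assert (Hrk : RtoC rho * s * s = r * RtoC K) by (unfold r; field; auto).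
split; intro Hlk.
- destruct (LP lk lk ltac:(lra) ltac:(ring)) as [Wk [_ [_ dSk]]].
  exact (fin1 (RtoC K) (p*p*q*q) (RtoC rho * s * s) r c1 c2 _ _ U
    (z2 rho Irho EI K s lk) (z4 rho Irho EI K s lk) (z5 rho Irho EI K s lk)
    (W lk) (dPsi1 lk) HKc Hrk Hc1 Hc2 Wk dSk).
- destruct (RP lk (lk - l)%R ltac:(lra) eq_refl) as [Wk [_ [_ dSk]]].
  exact (fin1 (RtoC K) (p*p*q*q) (RtoC rho * s * s) r c3 c4 _ _ U
    (z2 rho Irho EI K s (lk - l)) (z4 rho Irho EI K s (lk - l)) (z5 rho Irho EI K s (lk - l))
    (W lk) (dPsi2 lk) HKc Hrk Hc3 Hc4 Wk dSk).
Qed.
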